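(* Let $(a_n)_{n\in\mathbb{Z}}$ be the Somos-4 sequence, i.e. the unique sequence of positive rational numbers with $a_0=a_1=a_2=a_3=1$ and $$a_n\,a_{n-4}=a_{n-1}\,a_{n-3}+a_{n-2}^2\quad\text{for all } n\in\mathbb{Z}.$$ Then for all integers $s,t,u,v,w,x,y,z$, writing $(r_1,r_2,r_3,r_4)=(s,t,u,v)$ and $(c_1,c_2,c_3,c_4)=(w,x,y,z)$, the $4\times 4$ determinant $$\det\left[a_{r_i-c_j}\,a_{r_i+c_j}\right]_{1\le i,j\le 4}$$ is equal to $0$.
   Context: The sequence is extended to negative indices by the same recurrence (run backwards); all terms are positive, so it is well defined (e.g. $a_{-1}=2$, $a_4=2$, $a_5=3$, $a_6=7$, and $a_{3-n}=a_n$). The $(i,j)$ entry of the matrix is the product $a_{r_i-c_j}\,a_{r_i+c_j}$. *)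

(* Defs.v *)
From mathcomp Require Import all_boot all_order all_algebra.
Set Implicit Arguments. Unset Strict Implicit. Unset Printing Implicit Defensive.
Import Order.TTheory GRing.Theory Num.Theory.
Local Open Scope ring_scope.

Definition is_somos4 (a : int -> rat) : Prop :=
  (forall n : int, 0 < a n) /\
  (a 0 = 1 /\ a 1 = 1 /\ a 2 = 1 /\ a 3 = 1) /\
  (forall n : int, a n * a (n - 4) = a (n - 1) * a (n - 3) + a (n - 2) ^+ 2).

Definition somos_mx (a : int -> rat) (r c : 'I_4 -> int) : 'M[rat]_4 :=
  \matrix_(i < 4, j < 4) (a (r i - c j) * a (r i + c j)).

Definition vec4 (p q r s : int) (i : 'I_4) : int := nth 0 [:: p; q; r; s] i.

(* Main.v *)
Require Import Defs.
From mathcomp Require Import all_boot all_order all_algebra.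
From mathcomp Require Import zify ring lra.
Import Order.TTheory GRing.Theory Num.Theory.
Local Open Scope ring_scope.

Lemma inv_alg (x0 x1 x2 x3 x4 x5 : rat) :
  x1 != 0 -> x2 != 0 -> x3 != 0 -> x4 != 0 ->
  x4 * x0 = x3 * x1 + x2 ^+ 2 -> x5 * x1 = x4 * x2 + x3 ^+ 2 ->
  x5 * x2 / (x4 * x3) + x4 * x1 / (x3 * x2) + x3 ^+ 2 / (x4 * x2) =
  x4 * x1 / (x3 * x2) + x3 * x0 / (x2 * x1) + x2 ^+ 2 / (x3 * x1).
Proof.
move=> h1 h2 h3 h4 e0 e5.
have -> : x0 = (x3 * x1 + x2 ^+ 2) / x4 by rewrite -e0; field.
have -> : x5 = (x4 * x2 + x3 ^+ 2) / x1 by rewrite -e5; field.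
by field; rewrite ?h1 ?h2 ?h3 ?h4 /=.
Qed.

Lemma AA_alg (p q r s t u : rat) : q != 0 -> t != 0 ->
  u * q = t * r + s ^+ 2 -> t * p = s * q + r ^+ 2 ->
  t * q ^+ 2 + s ^+ 2 * p + r ^+ 3 - 4 * s * r * q = 0 ->
  (r * u - s * t) * (p * s - q * r) = (2 * (r * s) - q * t) ^+ 2.
Proof.
move=> hq ht eu ep hJ.
have eu' : u = (t * r + s ^+ 2) / q by rewrite -eu; field; rewrite ?hq ?ht.
have ep' : p = (s * q + r ^+ 2) / t by rewrite -ep; field; rewrite ?hq ?ht.
have hJ' : t^+2 * q^+2 + s^+2 * (s*q + r^+2) + t * r^+3 - 4 * t * s * r * q = 0.
  by rewrite -[RHS](mulr0 t) -hJ ep'; field.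
rewrite eu' ep'; apply/eqP; rewrite -subr_eq0; apply/eqP.
transitivity ((- q * t + r * s) * (t^+2 * q^+2 + s^+2 * (s*q + r^+2) + t * r^+3 - 4 * t * s * r * q) / (q * t)).
  by field; rewrite hq ht.
by rewrite hJ' mulr0 mul0r.
Qed.

Lemma BB_alg (p q r s t u : rat) : q != 0 -> t != 0 ->
  u * q = t * r + s ^+ 2 -> t * p = s * q + r ^+ 2 ->
  t * q ^+ 2 + s ^+ 2 * p + r ^+ 3 - 4 * s * r * q = 0 ->
  (2 * (s * t) - r * u) * (2 * (q * r) - p * s) =
  (q * t - r * s) ^+ 2 - (q * t - r * s) * (2 * (r * s) - q * t).
Proof.
move=> hq ht eu ep hJ.
have eu' : u = (t * r + s ^+ 2) / q by rewrite -eu; field; rewrite ?hq ?ht.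
have ep' : p = (s * q + r ^+ 2) / t by rewrite -ep; field; rewrite ?hq ?ht.
have hJ' : t^+2 * q^+2 + s^+2 * (s*q + r^+2) + t * r^+3 - 4 * t * s * r * q = 0.
  by rewrite -[RHS](mulr0 t) -hJ ep'; field.
rewrite eu' ep'; apply/eqP; rewrite -subr_eq0; apply/eqP.
transitivity ((- 2 * q * t + r * s) * (t^+2 * q^+2 + s^+2 * (s*q + r^+2) + t * r^+3 - 4 * t * s * r * q) / (q * t)).
  by field; rewrite hq ht.
by rewrite hJ' mulr0 mul0r.
Qed.

Lemma AB_alg (p q r s t u : rat) : q != 0 -> t != 0 ->
  u * q = t * r + s ^+ 2 -> t * p = s * q + r ^+ 2 ->
  t * q ^+ 2 + s ^+ 2 * p + r ^+ 3 - 4 * s * r * q = 0 ->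
  (r * u - s * t) * (2 * (q * r) - p * s) + (2 * (s * t) - r * u) * (p * s - q * r) =
  (q * t - r * s) ^+ 2 + 4 * (q * t - r * s) * (2 * (r * s) - q * t).
Proof.
move=> hq ht eu ep hJ.
have eu' : u = (t * r + s ^+ 2) / q by rewrite -eu; field; rewrite ?hq ?ht.
have ep' : p = (s * q + r ^+ 2) / t by rewrite -ep; field; rewrite ?hq ?ht.
have hJ' : t^+2 * q^+2 + s^+2 * (s*q + r^+2) + t * r^+3 - 4 * t * s * r * q = 0.
  by rewrite -[RHS](mulr0 t) -hJ ep'; field.
rewrite eu' ep'; apply/eqP; rewrite -subr_eq0; apply/eqP.
transitivity ((3 * q^+2 * t^+2 - 2 * q * r * s * t) * (t^+2 * q^+2 + s^+2 * (s*q + r^+2) + t * r^+3 - 4 * t * s * r * q) / (q^+2 * t^+2)).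
  by field; rewrite hq ht.
by rewrite hJ' mulr0 mul0r.
Qed.

Lemma oct_alg (X1 Y1 X2 Y2 X Y A B A1 B1 A2 B2 : rat) :
  X1 * X2 = Y * (X + Y) -> Y1 * Y2 = X ^+ 2 -> X1 * Y2 + Y1 * X2 = 4 * X * Y - Y ^+ 2 ->
  A1 * A2 = B ^+ 2 -> B1 * B2 = A ^+ 2 - A * B -> A1 * B2 + B1 * A2 = A ^+ 2 + 4 * A * B ->
  (X1 * A + Y1 * B) * (X2 * A + Y2 * B) = (X * A1 + Y * B1) * (X * A2 + Y * B2).
Proof.
move=> h1 h2 h3 h4 h5 h6.
have -> : (X1 * A + Y1 * B) * (X2 * A + Y2 * B) =
  A ^+ 2 * (X1 * X2) + A * B * (X1 * Y2 + Y1 * X2) + B ^+ 2 * (Y1 * Y2) by ring.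
have -> : (X * A1 + Y * B1) * (X * A2 + Y * B2) =
  X ^+ 2 * (A1 * A2) + X * Y * (A1 * B2 + B1 * A2) + Y ^+ 2 * (B1 * B2) by ring.
rewrite h1 h2 h3 h4 h5 h6; ring.
Qed.

Lemma int_ind1 (P : int -> Prop) : P 0 ->
  (forall n, P n -> P (n + 1)) -> (forall n, P (n + 1) -> P n) -> forall n, P n.
Proof.
move=> P0 up dn.
have hp : forall k : nat, P k.
  elim=> [//|k IH]; have -> : (k.+1 : int) = (k : int) + 1 by lia. exact: up.
have hn : forall k : nat, P (- (k : int)).
  elim=> [|k IH]; first by rewrite oppr0.
  apply: dn; have -> : - (k.+1 : int) + 1 = - (k : int) by lia. exact: IH.
case=> k; first exact: hp.
by rewrite NegzE; apply: hn.
Qed.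

Lemma int_ind2 (P : int -> Prop) : P 0 -> P 1 ->
  (forall n, P (n - 1) -> P n -> P (n + 1)) ->
  (forall n, P n -> P (n + 1) -> P (n - 1)) -> forall n, P n.
Proof.
move=> P0 P1 up dn.
have hp : forall k : nat, P k /\ P ((k : int) + 1).
  elim=> [|k [IH1 IH2]]; first by split.
  split; first by have -> : (k.+1 : int) = (k : int) + 1 by lia.
  have -> : (k.+1 : int) + 1 = ((k : int) + 1) + 1 by lia.
  apply: up => //; by have -> : (k : int) + 1 - 1 = k by lia.
have hn : forall k : nat, P (- (k : int)) /\ P (- (k : int) + 1).
  elim=> [|k [IH1 IH2]]; first by rewrite oppr0 add0r.
  split; last by have -> : - (k.+1 : int) + 1 = - (k : int) by lia.
  have -> : - (k.+1 : int) = - (k : int) - 1 by lia.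
  exact: dn.
case=> k; first exact: (hp k).1.
by rewrite NegzE; apply: (hn k.+1).1.
Qed.

Section Seq.
Variable a : int -> rat.
Hypothesis Ha : is_somos4 a.

Lemma apos n : 0 < a n.
Proof. by case: Ha => h _; apply: h. Qed.

Lemma anz n : a n != 0.
Proof. by rewrite gt_eqF // apos. Qed.

Lemma arec m : a (m + 4) * a m = a (m + 3) * a (m + 1) + a (m + 2) ^+ 2.
Proof.
case: Ha => _ [_ H]; have := H (m + 4).
have -> : m + 4 - 4 = m by lia.
have -> : m + 4 - 1 = m + 3 by lia.
have -> : m + 4 - 3 = m + 1 by lia.
by have -> : m + 4 - 2 = m + 2 by lia.
Qed.

Lemma a0 : a 0 = 1. Proof. by case: Ha => _ [[? [? [? ?]]] _]. Qed.
Lemma a1 : a 1 = 1. Proof. by case: Ha => _ [[? [? [? ?]]] _]. Qed.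
Lemma a2 : a 2 = 1. Proof. by case: Ha => _ [[? [? [? ?]]] _]. Qed.
Lemma a3 : a 3 = 1. Proof. by case: Ha => _ [[? [? [? ?]]] _]. Qed.
Lemma a4 : a 4 = 2.
Proof.
have := arec 0; rewrite !add0r a0 a1 a2 a3 mulr1 => ->.
by rewrite expr1n.
Qed.

Lemma aE i j : i = j -> a i = a j.
Proof. by move=> ->. Qed.

Lemma sym_nat : forall k j : nat, (j <= k + 3)%N -> a (3 - (j : int)) = a j.
Proof.
elim=> [|k IH] j hj.
  case: j hj => [|[|[|[|j]]]] hj.
  - by rewrite subr0 a0 a3.
  - rewrite (aE (3 - (1%N : int)) (2)); [by rewrite a1 a2 | lia].
  - rewrite (aE (3 - (2%N : int)) (1)); [by rewrite a1 a2 | lia].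
  - rewrite (aE (3 - (3%N : int)) (0)); [by rewrite a0 a3 | lia].
  - lia.
case: (ltnP j (k + 4)) => hjk; first by apply: IH; lia.
have -> : j = (k + 4)%N by lia.
have e1 := arec (k : int).
have e2 := arec (-1 - (k : int)).
have h0 : a (3 - (k : int)) = a k by apply: IH; lia.
have h1 : a (3 - ((k + 1)%N : int)) = a (k + 1)%N by apply: IH; lia.
have h2 : a (3 - ((k + 2)%N : int)) = a (k + 2)%N by apply: IH; lia.
have h3 : a (3 - ((k + 3)%N : int)) = a (k + 3)%N by apply: IH; lia.
move: e2.
rewrite (aE (-1 - (k : int) + 4) (3 - (k : int))); last by lia.
rewrite (aE (-1 - (k : int) + 3) (3 - ((k + 1)%N : int))); last by lia.
rewrite (aE (-1 - (k : int) + 1) (3 - ((k + 3)%N : int))); last by lia.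
rewrite (aE (-1 - (k : int) + 2) (3 - ((k + 2)%N : int))); last by lia.
rewrite h0 h1 h2 h3.
rewrite (aE (((k + 1)%N : int)) ((k : int) + 1)); last by lia.
rewrite (aE (((k + 2)%N : int)) ((k : int) + 2)); last by lia.
rewrite (aE (((k + 3)%N : int)) ((k : int) + 3)); last by lia.
move=> e2.
rewrite (aE (((k + 4)%N : int)) ((k : int) + 4)); last by lia.
rewrite (aE (3 - ((k + 4)%N : int)) (-1 - (k : int))); last by lia.
apply: (mulfI (anz k)); rewrite e2 [a k * _]mulrC e1; ring.
Qed.

Lemma asym n : a (3 - n) = a n.
Proof.
case: (lerP 0 n) => hn.
  have [k ->] : exists k : nat, n = k by exists `|n|%N; lia.
  by apply: (sym_nat k k); lia.
have [k hk] : exists k : nat, 3 - n = k by exists `|3 - n|%N; lia.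
have hk3 : (k <= k + 3)%N by lia.
have := sym_nat k k hk3.
rewrite -hk (aE (3 - (3 - n)) n) //; lia.
Qed.


Definition Iv m := a (m + 4) * a (m + 1) / (a (m + 3) * a (m + 2)) +
  a (m + 3) * a m / (a (m + 2) * a (m + 1)) + a (m + 2) ^+ 2 / (a (m + 3) * a (m + 1)).

Lemma Iv_step m : Iv (m + 1) = Iv m.
Proof.
rewrite /Iv.
rewrite (aE (m + 1 + 4) (m + 5)); last lia.
rewrite (aE (m + 1 + 3) (m + 4)); last lia.
rewrite (aE (m + 1 + 2) (m + 3)); last lia.
rewrite (aE (m + 1 + 1) (m + 2)); last lia.
apply: inv_alg; rewrite ?anz //; first exact: arec.
have := arec (m + 1).
rewrite (aE (m + 1 + 4) (m + 5)); last lia.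
rewrite (aE (m + 1 + 3) (m + 4)); last lia.
rewrite (aE (m + 1 + 2) (m + 3)); last lia.
by rewrite (aE (m + 1 + 1) (m + 2)); last lia.
Qed.

Lemma Iv4 m : Iv m = 4.
Proof.
move: m; apply: (@int_ind1 (fun m => Iv m = 4)).
- by rewrite /Iv !add0r a0 a1 a2 a3 a4; field.
- by move=> m h; rewrite Iv_step.
- by move=> m h; rewrite -Iv_step.
Qed.

Lemma Jrel m : a (m + 4) * a (m + 1) ^+ 2 + a (m + 3) ^+ 2 * a m + a (m + 2) ^+ 3
  - 4 * a (m + 3) * a (m + 2) * a (m + 1) = 0.
Proof.
have := Iv4 m; rewrite /Iv => h.
transitivity (a (m + 3) * a (m + 2) * a (m + 1) * (Iv m - 4)).
  rewrite /Iv; field; by rewrite ?anz.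
by rewrite Iv4 subrr mulr0.
Qed.


Ltac nidx i j := rewrite (aE i j); last lia.

Definition X r := a (r + 1) * a (r - 1).
Definition Y r := a r ^+ 2.
Definition A c := a c * a (c + 3) - a (c + 1) * a (c + 2).
Definition B c := 2 * (a (c + 1) * a (c + 2)) - a c * a (c + 3).
Definition M r c := X r * A c + Y r * B c.
Definition N r c := a (r - c) * a (r + c).

Lemma XX r : X (r + 1) * X (r - 1) = Y r * (X r + Y r).
Proof.
rewrite /X /Y.
nidx (r + 1 + 1) (r + 2). nidx (r + 1 - 1) r. nidx (r - 1 + 1) r. nidx (r - 1 - 1) (r - 2).
have := arec (r - 2).
nidx (r - 2 + 4) (r + 2). nidx (r - 2 + 3) (r + 1). nidx (r - 2 + 2) r. nidx (r - 2 + 1) (r - 1).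
move=> e.
transitivity (a r ^+ 2 * (a (r + 2) * a (r - 2))); first ring.
by rewrite e.
Qed.

Lemma YY r : Y (r + 1) * Y (r - 1) = X r ^+ 2.
Proof. rewrite /X /Y; ring. Qed.

Lemma XY r : X (r + 1) * Y (r - 1) + Y (r + 1) * X (r - 1) = 4 * X r * Y r - Y r ^+ 2.
Proof.
rewrite /X /Y.
nidx (r + 1 + 1) (r + 2). nidx (r + 1 - 1) r. nidx (r - 1 + 1) r. nidx (r - 1 - 1) (r - 2).
have := Jrel (r - 2).
nidx (r - 2 + 4) (r + 2). nidx (r - 2 + 3) (r + 1). nidx (r - 2 + 2) r. nidx (r - 2 + 1) (r - 1).
move=> e.
apply/eqP; rewrite -subr_eq0; apply/eqP.
transitivity (a r * (a (r + 2) * a (r - 1) ^+ 2 + a (r + 1) ^+ 2 * a (r - 2) + a r ^+ 3 -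
   4 * a (r + 1) * a r * a (r - 1))); first ring.
by rewrite e mulr0.
Qed.

Lemma ABprep c (G : rat -> rat -> rat -> rat -> rat -> rat -> Prop) :
  (forall p q r s t u : rat, q != 0 -> t != 0 ->
    u * q = t * r + s ^+ 2 -> t * p = s * q + r ^+ 2 ->
    t * q ^+ 2 + s ^+ 2 * p + r ^+ 3 - 4 * s * r * q = 0 -> G p q r s t u) ->
  G (a (c - 1)) (a c) (a (c + 1)) (a (c + 2)) (a (c + 3)) (a (c + 4)).
Proof.
move=> H; apply: H; rewrite ?anz //; first exact: arec.
  have := arec (c - 1).
  nidx (c - 1 + 4) (c + 3). nidx (c - 1 + 3) (c + 2). nidx (c - 1 + 2) (c + 1).
  by nidx (c - 1 + 1) c.
have := Jrel (c - 1).
nidx (c - 1 + 4) (c + 3). nidx (c - 1 + 3) (c + 2). nidx (c - 1 + 2) (c + 1).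
by nidx (c - 1 + 1) c.
Qed.

Lemma Aidx c : A (c + 1) = a (c + 1) * a (c + 4) - a (c + 2) * a (c + 3) /\ A (c - 1) = a (c - 1) * a (c + 2) - a c * a (c + 1) /\ B (c + 1) = 2 * (a (c + 2) * a (c + 3)) - a (c + 1) * a (c + 4) /\ B (c - 1) = 2 * (a c * a (c + 1)) - a (c - 1) * a (c + 2).
Proof.
rewrite /A /B.
nidx (c + 1 + 3) (c + 4). nidx (c + 1 + 1) (c + 2). nidx (c + 1 + 2) (c + 3).
nidx (c - 1 + 3) (c + 2). nidx (c - 1 + 1) c. nidx (c - 1 + 2) (c + 1).
by [].
Qed.

Lemma AA c : A (c + 1) * A (c - 1) = B c ^+ 2.
Proof.
have [-> [-> _]] := Aidx c; rewrite /B.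
exact: (ABprep c (fun p q r s t u => (r * u - s * t) * (p * s - q * r) = (2 * (r * s) - q * t) ^+ 2) (@AA_alg)).
Qed.

Lemma BB c : B (c + 1) * B (c - 1) = A c ^+ 2 - A c * B c.
Proof.
have [_ [_ [-> ->]]] := Aidx c; rewrite /A /B.
exact: (ABprep c (fun p q r s t u => (2 * (s * t) - r * u) * (2 * (q * r) - p * s) =
  (q * t - r * s) ^+ 2 - (q * t - r * s) * (2 * (r * s) - q * t)) (@BB_alg)).
Qed.

Lemma AB c : A (c + 1) * B (c - 1) + B (c + 1) * A (c - 1) = A c ^+ 2 + 4 * A c * B c.
Proof.
have [-> [-> [-> ->]]] := Aidx c; rewrite /A /B.
exact: (ABprep c (fun p q r s t u => (r * u - s * t) * (2 * (q * r) - p * s) + (2 * (s * t) - r * u) * (p * s - q * r) =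
  (q * t - r * s) ^+ 2 + 4 * (q * t - r * s) * (2 * (r * s) - q * t)) (@AB_alg)).
Qed.

Lemma octM r c : M (r + 1) c * M (r - 1) c = M r (c + 1) * M r (c - 1).
Proof. by apply: oct_alg; rewrite ?XX ?YY ?XY ?AA ?BB ?AB. Qed.

Lemma octN r c : N (r + 1) c * N (r - 1) c = N r (c + 1) * N r (c - 1).
Proof.
rewrite /N.
nidx (r - (c + 1)) (r - 1 - c). nidx (r + (c + 1)) (r + 1 + c).
nidx (r - (c - 1)) (r + 1 - c). nidx (r + (c - 1)) (r - 1 + c).
ring.
Qed.

Lemma Nnz r c : N r c != 0.
Proof. by rewrite mulf_neq0 ?anz. Qed.

Lemma NM r c : N r c = M r c.
Proof.
move: r c; apply: (@int_ind2 (fun r => forall c, N r c = M r c)).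
- move=> c; rewrite /M /N /X /Y /A /B.
  nidx (0 - c) (3 - (c + 3)). rewrite asym. nidx (0 + c) c.
  nidx (0 + 1 : int) (1 : int). nidx (0 - 1 : int) (3 - 4 : int). rewrite asym a0 a1 a4; ring.
- move=> c; rewrite /M /N /X /Y /A /B.
  nidx (1 - c) (3 - (c + 2)). rewrite asym. nidx (1 + c) (c + 1).
  nidx (1 + 1 : int) (2 : int). nidx (1 - 1 : int) (0 : int). rewrite a0 a1 a2; ring.
- move=> n H1 H2 c.
  apply: (mulIf (Nnz (n - 1) c)).
  by rewrite octN !H2 -octM H1.
- move=> n H1 H2 c.
  apply: (mulfI (Nnz (n + 1) c)).
  by rewrite octN !H1 -octM H2.
Qed.

End Seq.

Lemma det_rank2 (xf yf af bf : 'I_4 -> rat) :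
  \det (\matrix_(i < 4, j < 4) (xf i * af j + yf i * bf j)) = 0.
Proof.
pose L := \matrix_(i < 4, k < 4) (nth 0 [:: xf i; yf i; 0; 0] k).
pose R := \matrix_(k < 4, j < 4) (nth 0 [:: af j; bf j; 0; 0] k).
have -> : \matrix_(i < 4, j < 4) (xf i * af j + yf i * bf j) = L *m R.
  apply/matrixP => i j; rewrite !mxE !big_ord_recl big_ord0 /= !mxE /=.
  by rewrite !mul0r !addr0.
rewrite det_mulmx (expand_det_row R ord_max) big1 ?mulr0 // => j _.
by rewrite mxE /= mul0r.
Qed.

Theorem corollary4 (a : int -> rat) (s t u v w x y z : int) :
  is_somos4 a ->
  \det (somos_mx a (vec4 s t u v) (vec4 w x y z)) = 0.
Proof.
move=> Ha.
set r := vec4 s t u v; set c := vec4 w x y z.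
have -> : somos_mx a r c = \matrix_(i < 4, j < 4)
   (X a (r i) * A a (c j) + Y a (r i) * B a (c j)).
  apply/matrixP => i j; rewrite !mxE; exact: (@NM a Ha).
exact: det_rank2.
Qed.
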